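(* Let $\mathcal{C}$ be a super-modular tensor category and $\check{\mathcal{C}}$ any minimal modular extension of it. Suppose $e^{i\phi_a}$, $a\in\mathcal{C}$, are phases obeying $e^{i\phi_a}e^{i\phi_b}=e^{i\phi_c}$ whenever $N_{ab}^c\neq 0$ for $a,b,c\in\mathcal{C}$. Then $e^{i\phi_a}=M_{a,x}$ for some $x\in\check{\mathcal{C}}$, and if $e^{i\phi_\psi}=+1$, then $x\in\mathcal{A}$.
   Context: A super-modular tensor category $\mathcal{C}$ is a unitary braided fusion category whose only nontrivial transparent particle is a fermion $\psi$ ($\theta_\psi=-1$, $\psi\times\psi=1$). A minimal modular extension $\check{\mathcal{C}}$ is a unitary modular tensor category containing $\mathcal{C}$ with $\mathcal{D}^2_{\check{\mathcal{C}}}=2\mathcal{D}^2_{\mathcal{C}}$. $M_{ab}=S^*_{ab}S_{11}/(S_{1a}S_{1b})$ is the scalar monodromy in $\check{\mathcal{C}}$, and $\mathcal{A}\subset\mathcal{C}$ denotes the Abelian anyons of $\mathcal{C}$. (The set of such phase assignments forms the Abelian group $K(\mathcal{C})$.) *)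

(* Defs.v *)
(* Unitary modular tensor categories are encoded through
   their (unitary) modular data: a finite label set of simple objects with
   fusion rules N, an S-matrix and topological spins theta, subject to the
   standard identities satisfied by the modular data of any UMTC. *)
From HB Require Import structures.
From mathcomp Require Import all_boot all_order all_algebra.
Set Implicit Arguments. Unset Strict Implicit. Unset Printing Implicit Defensive.
Import Order.TTheory GRing.Theory Num.Theory.
Local Open Scope ring_scope.

Section ModularData.
Variables (K : numClosedFieldType) (L : finType) (one : L) (dual : L -> L)
          (N : L -> L -> L -> nat) (S : L -> L -> K) (theta : L -> K).

Definition qdim (a : L) : K := S one a / S one one.
Definition totdim : K := (S one one)^-1.

Definition monodromy (a b : L) : K :=
  (S a b)^* * S one one / (S one a * S one b).

Definition is_unitary_modular_data : Prop :=
  dual one = one /\ (forall a, dual (dual a) = a) /\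
  (forall a b, N one a b = (a == b) :> nat) /\
  (forall a b c, N a b c = N b a c) /\
  (forall a b, N a b one = (b == dual a) :> nat) /\
  (forall a b c, N a b c = N (dual a) c b) /\
  (forall a b c d, \sum_e N a b e * N e c d = \sum_f N b c f * N a f d)%N /\
  (forall a, `|theta a| = 1) /\ theta one = 1 /\
  (forall a, theta (dual a) = theta a) /\
  (forall a, 0 < S one a) /\
  (forall a b, S a b = S b a) /\
  (forall a b, S a (dual b) = (S a b)^*) /\
  (forall a c, \sum_b S a b * (S c b)^* = (a == c)%:R) /\
  (forall a b, S a b = totdim^-1 *
     \sum_c (N (dual a) b c)%:R * qdim c * theta c / (theta a * theta b)) /\
  (forall a b c, (N a b c)%:R = \sum_x S a x * S b x * (S c x)^* / S one x).

(* a subset of simple labels closed under unit, duals and fusion: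
   the simple objects of a full fusion subcategory *)
Definition fusion_subcat (inC : pred L) : Prop :=
  [/\ inC one, (forall a, inC a -> inC (dual a)) &
      (forall a b c, inC a -> inC b -> N a b c <> 0%N -> inC c)].

(* C (the labels inC inside the UMTC L) is super-modular with fermion psi,
   and L is a minimal modular extension of C:  D^2_L = 2 D^2_C. *)
Definition super_modular_with_min_ext (inC : pred L) (psi : L) : Prop :=
  is_unitary_modular_data /\ fusion_subcat inC /\ inC psi /\
  psi != one /\ theta psi = -1 /\
  (forall c, N psi psi c = (c == one) :> nat) /\
  (forall a, inC a -> ((forall b, inC b -> monodromy a b = 1) <->
                       (a = one \/ a = psi))) /\
  \sum_a qdim a ^+ 2 = 2 * \sum_(a | inC a) qdim a ^+ 2.

Definition abelian_anyon (inC : pred L) (a : L) : Prop :=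
  inC a /\ (forall c, N a (dual a) c = (c == one)%N).

End ModularData.

(* Main.v *)
Require Import Defs.
From HB Require Import structures.
From mathcomp Require Import all_boot all_order all_algebra.
From mathcomp Require Import ring.
Import Order.TTheory GRing.Theory Num.Theory.
Local Open Scope ring_scope.

Set Implicit Arguments.
Section Aux.
Variables (K : numClosedFieldType) (L : finType) (one : L) (dual : L -> L)
  (N : L -> L -> L -> nat) (S : L -> L -> K) (theta : L -> K).
Hypothesis UMD : is_unitary_modular_data one dual N S theta.

Lemma sum_delta (F : L -> K) x : \sum_y F y * (x == y)%:R = F x.
Proof.
rewrite (bigD1 x) //= eqxx mulr1 big1 ?addr0 // => y ne.
by rewrite eq_sym (negbTE ne) mulr0.
Qed.

Lemma S1pos a : 0 < S one a.
Proof. by case: UMD => _ [_ [_ [_ [_ [_ [_ [_ [_ [_ [H _]]]]]]]]]]. Qed.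
Lemma Ssym a b : S a b = S b a.
Proof. by case: UMD => _ [_ [_ [_ [_ [_ [_ [_ [_ [_ [_ [H _]]]]]]]]]]]. Qed.
Lemma Sdual a b : S a (dual b) = (S a b)^*.
Proof. by case: UMD => _ [_ [_ [_ [_ [_ [_ [_ [_ [_ [_ [_ [H _]]]]]]]]]]]]. Qed.
Lemma Sorth a c : \sum_b S a b * (S c b)^* = (a == c)%:R.
Proof. by case: UMD => _ [_ [_ [_ [_ [_ [_ [_ [_ [_ [_ [_ [_ [H _]]]]]]]]]]]]]. Qed.
Lemma Sbal a b : S a b = (totdim one S)^-1 *
     \sum_c (N (dual a) b c)%:R * qdim one S c * theta c / (theta a * theta b).
Proof. by case: UMD => _ [_ [_ [_ [_ [_ [_ [_ [_ [_ [_ [_ [_ [_ [H _]]]]]]]]]]]]]]. Qed.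
Lemma Verl a b c : (N a b c)%:R = \sum_x S a x * S b x * (S c x)^* / S one x.
Proof. by case: UMD => _ [_ [_ [_ [_ [_ [_ [_ [_ [_ [_ [_ [_ [_ [_ H]]]]]]]]]]]]]]. Qed.
Lemma dual_one : dual one = one.
Proof. by case: UMD. Qed.
Lemma dualK a : dual (dual a) = a.
Proof. by case: UMD => _ [H _]. Qed.
Lemma N1 a b : N one a b = (a == b) :> nat.
Proof. by case: UMD => _ [_ [H _]]. Qed.
Lemma Ncomm a b c : N a b c = N b a c.
Proof. by case: UMD => _ [_ [_ [H _]]]. Qed.
Lemma Nab1 a b : N a b one = (b == dual a) :> nat.
Proof. by case: UMD => _ [_ [_ [_ [H _]]]]. Qed.
Lemma thabs a : `|theta a| = 1.
Proof. by case: UMD => _ [_ [_ [_ [_ [_ [_ [H _]]]]]]]. Qed.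
Lemma S1real a : (S one a)^* = S one a.
Proof. by rewrite conj_Creal // gtr0_real // S1pos. Qed.
Lemma S1neq0 a : S one a != 0.
Proof. by rewrite gt_eqF // S1pos. Qed.
Lemma colorth x y : \sum_c S c x * (S c y)^* = (x == y)%:R.
Proof. by rewrite -Sorth; apply: eq_bigr => c _; rewrite (Ssym c x) (Ssym c y). Qed.

Lemma charS a b x : \sum_c (N a b c)%:R * S c x = S a x * S b x / S one x.
Proof.
under eq_bigr => c _ do rewrite Verl mulr_suml.
rewrite exchange_big /=.
transitivity (\sum_y (S a y * S b y / S one y) * (x == y)%:R); last by rewrite sum_delta.
apply: eq_bigr => y _; rewrite -colorth mulr_sumr; apply: eq_bigr => c _.
by ring.
Qed.
Lemma S11neq0 : S one one != 0. Proof. exact: S1neq0. Qed.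
Lemma qdim_pos a : 0 < qdim one S a.
Proof. by rewrite /qdim divr_gt0 // S1pos. Qed.
Lemma qdim1 : qdim one S one = 1.
Proof. by rewrite /qdim divff // S1neq0. Qed.
Lemma qdim_real a : (qdim one S a)^* = qdim one S a.
Proof. by rewrite conj_Creal // gtr0_real // qdim_pos. Qed.
Lemma qdim_dual a : qdim one S (dual a) = qdim one S a.
Proof. by rewrite /qdim Sdual S1real. Qed.
Lemma charD a b : qdim one S a * qdim one S b = \sum_c (N a b c)%:R * qdim one S c.
Proof.
rewrite /qdim; under eq_bigr => c _ do rewrite mulrA -(Ssym c one).
rewrite -mulr_suml charS (Ssym a) (Ssym b).
by field; rewrite S1neq0.
Qed.
Lemma S1sum : \sum_x S one x * S one x = 1.
Proof. transitivity ((one == one)%:R : K); last by rewrite eqxx. by rewrite -Sorth; apply: eq_bigr => x _; rewrite S1real. Qed.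
Variables (inC : pred L) (phase : L -> K).
Hypothesis HC : fusion_subcat one dual N inC.
Hypothesis Hph : forall a, inC a -> `|phase a| = 1.
Hypothesis Hmul : forall a b c, inC a -> inC b -> inC c -> N a b c <> 0%N ->
     phase a * phase b = phase c.

Lemma inC1 : inC one. Proof. by case: HC. Qed.
Lemma inCd a : inC a -> inC (dual a). Proof. by case: HC => _ H _; apply: H. Qed.
Lemma inCN a b c : inC a -> inC b -> N a b c <> 0%N -> inC c.
Proof. by case: HC => _ _ H; apply: H. Qed.
Lemma inCN0 a b c : inC a -> inC b -> ~~ inC c -> N a b c = 0%N.
Proof. by move=> ha hb hc; apply/eqP; apply: contraNT hc => /eqP; apply: inCN. Qed.

Lemma phase_conj a : inC a -> (phase a)^* * phase a = 1.
Proof. by move=> h; rewrite mulrC -normCK Hph // expr1n. Qed.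
Lemma phase_neq0 a : inC a -> phase a != 0.
Proof. by move=> h; rewrite -normr_eq0 Hph // oner_eq0. Qed.
Lemma phase1 : phase one = 1.
Proof.
have h : phase one * phase one = phase one.
  by apply: Hmul; rewrite ?inC1 // N1 eqxx.
by move: h; rewrite -{3}(mul1r (phase one)) => /(mulIf (phase_neq0 inC1)).
Qed.
Lemma phase_dual a : inC a -> phase (dual a) = (phase a)^*.
Proof.
move=> h; have e : phase a * phase (dual a) = phase one.
  by apply: Hmul; rewrite ?inC1 ?inCd // Nab1 eqxx.
by rewrite -[LHS]mul1r -(phase_conj h) -mulrA e phase1 mulr1.
Qed.

Definition f a := if inC a then (phase a)^* * qdim one S a else 0.
Lemma f1 : f one = 1.
Proof. by rewrite /f inC1 phase1 qdim1 rmorph1 mulr1. Qed.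
Lemma fchar a b : inC a -> inC b -> f a * f b = \sum_c (N a b c)%:R * f c.
Proof.
move=> ha hb; rewrite /f ha hb.
transitivity ((phase a * phase b)^* * (qdim one S a * qdim one S b)); first by rewrite rmorphM; ring.
rewrite charD mulr_sumr; apply: eq_bigr => c _.
case: (boolP (inC c)) => hc; last by rewrite (@inCN0 a b c ha hb hc) mulr0; ring.
have [->|nz] := eqVneq (N a b c) 0%N; first by ring.
rewrite -(Hmul ha hb hc); [ring | exact/eqP].
Qed.
Lemma f_dual b : f (dual b) = (f b)^*.
Proof.
rewrite /f; case: (boolP (inC b)) => hb.
  by rewrite inCd // phase_dual // qdim_dual rmorphM /= qdim_real.
case: (boolP (inC (dual b))) => hd; last by rewrite rmorph0.
by move: hb; rewrite -(dualK b) inCd.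
Qed.
Definition F x := \sum_c (S c x)^* * f c.
Definition G := \sum_a (f a)^* * f a.
Definition w x := (F x)^* * F x.
Definition h x b := S b x / S one x.

Lemma fS a : \sum_x S a x * F x = f a.
Proof.
rewrite /F; under eq_bigr => x _ do rewrite mulr_sumr.
rewrite exchange_big /=.
transitivity (\sum_c f c * (a == c)%:R); last by rewrite sum_delta.
apply: eq_bigr => c _; rewrite -Sorth mulr_sumr; apply: eq_bigr => x _; ring.
Qed.
Lemma Fconj x : (F x)^* = \sum_c S c x * (f c)^*.
Proof. by rewrite /F rmorph_sum /=; apply: eq_bigr => c _; rewrite rmorphM /= conjCK. Qed.

Lemma ffF a b : inC a -> inC b -> f a * f b = \sum_x F x * (S a x * S b x / S one x).
Proof.
move=> ha hb; rewrite fchar //.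
under eq_bigr => c _ do rewrite -fS mulr_sumr.
rewrite exchange_big /=; apply: eq_bigr => x _.
rewrite -charS mulr_sumr; apply: eq_bigr => c _; ring.
Qed.

Lemma key1 b : inC b -> \sum_x w x * h x b = G * f b.
Proof.
move=> hb; rewrite /G mulr_suml.
transitivity (\sum_a (f a)^* * \sum_x F x * (S a x * S b x / S one x)).
  symmetry; under eq_bigr => a _ do rewrite mulr_sumr.
  rewrite exchange_big /=; apply: eq_bigr => x _.
  rewrite /w /h Fconj !mulr_suml; apply: eq_bigr => a _; ring.
apply: eq_bigr => a _; case: (boolP (inC a)) => ha.
  by rewrite -ffF // mulrA.
by rewrite /f (negbTE ha) rmorph0 !mul0r.
Qed.

Lemma hone x : h x one = 1.
Proof. by rewrite /h divff // S1neq0. Qed.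
Lemma sumw : \sum_x w x = G.
Proof. by rewrite -[RHS]mulr1 -f1 -key1 ?inC1 //; apply: eq_bigr => x _; rewrite hone mulr1. Qed.

Lemma hconj x b : (h x b)^* = h x (dual b).
Proof. by rewrite /h rmorphM /= fmorphV /= S1real Ssym -Sdual Ssym. Qed.

Lemma hchar x a b : h x a * h x b = \sum_c (N a b c)%:R * h x c.
Proof.
rewrite /h; under eq_bigr => c _ do rewrite mulrA.
rewrite -mulr_suml charS; field; exact: S1neq0.
Qed.

Lemma key2 b : inC b -> \sum_x w x * (h x b * (h x b)^*) = G * (f b * (f b)^*).
Proof.
move=> hb; rewrite -f_dual fchar ?inCd // mulr_sumr.
under eq_bigr => x _ do rewrite hconj hchar mulr_sumr.
rewrite exchange_big /=; apply: eq_bigr => c _.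
case: (boolP (inC c)) => hc.
  by rewrite mulrCA -key1 // mulr_sumr; apply: eq_bigr => x _; ring.
rewrite (@inCN0 b (dual b) c hb (inCd hb) hc).
by rewrite big1 ?mul0r ?mulr0 // => x _; rewrite mulr0n mul0r mulr0.
Qed.
Lemma wreal x : (w x)^* = w x.
Proof. by rewrite /w rmorphM /= conjCK mulrC. Qed.
Lemma w_ge0 x : 0 <= w x.
Proof. by rewrite /w mulrC mul_conjC_ge0. Qed.
Lemma Greal : G^* = G.
Proof. by rewrite -sumw rmorph_sum; apply: eq_bigr => x _; rewrite /= wreal. Qed.
Lemma Gneq0 : G != 0.
Proof.
rewrite /G psumr_neq0 => [|a _]; last by rewrite mulrC mul_conjC_ge0.
apply/hasP; exists one; first exact: mem_index_enum.
by rewrite f1 rmorph1 mulr1 ltr01.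
Qed.

Lemma variance b : inC b ->
  \sum_x w x * ((h x b - f b) * (h x b - f b)^*) = 0.
Proof.
move=> hb.
have E x : w x * ((h x b - f b) * (h x b - f b)^*) =
  w x * (h x b * (h x b)^*) - (w x * h x b) * (f b)^* - f b * (w x * h x b)^*
  + w x * (f b * (f b)^*).
  by rewrite !rmorphB /= (rmorphM _ (w x)) /= wreal; ring.
rewrite (eq_bigr _ (fun x _ => E x)) big_split /= !sumrB key2 //.
rewrite -mulr_suml -mulr_suml -mulr_sumr -rmorph_sum key1 // sumw.
by rewrite rmorphM /= Greal; ring.
Qed.

Lemma hfeq x b : inC b -> w x != 0 -> h x b = f b.
Proof.
move=> hb wx; apply/eqP; rewrite -subr_eq0 -mul_conjC_eq0.
have := variance hb; move/eqP; rewrite psumr_eq0; last first.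
  by move=> y _; rewrite mulr_ge0 ?w_ge0 ?mul_conjC_ge0.
move/allP/(_ x (mem_index_enum _)) => /=.
by rewrite mulf_eq0 (negbTE wx).
Qed.

Lemma exw : exists x, w x != 0.
Proof.
case: (boolP [exists x, w x != 0]) => [/existsP//|/existsPn H].
have : G = 0 by rewrite -sumw big1 // => x _; have := H x; rewrite negbK => /eqP.
by move/eqP; rewrite (negbTE Gneq0).
Qed.
Variables (psi : L).
Hypothesis Hpsi : inC psi.
Hypothesis Hpsi1 : psi != one.
Hypothesis Hth : theta psi = -1.
Hypothesis HNpsi : forall c, N psi psi c = (c == one) :> nat.
Hypothesis Htr : forall a, inC a -> ((forall b, inC b -> monodromy one S a b = 1) <->
                       (a = one \/ a = psi)).
Hypothesis Hdim : \sum_a qdim one S a ^+ 2 = 2 * \sum_(a | inC a) qdim one S a ^+ 2.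

Lemma sum_delta' (F' : L -> K) x : \sum_y ((y == x) : nat)%:R * F' y = F' x.
Proof.
rewrite (bigD1 x) //= eqxx mul1r big1 ?addr0 // => y /negbTE ->; by rewrite mul0r.
Qed.

Lemma dpsi : qdim one S psi = 1.
Proof.
have e := charD psi psi.
rewrite (eq_bigr (fun c => ((c == one) : nat)%:R * qdim one S c)) in e;
  last by move=> c _; rewrite HNpsi.
rewrite sum_delta' qdim1 in e.
have : qdim one S psi ^+ 2 == 1 by rewrite expr2 e.
by rewrite sqrp_eq1 ?ltW ?qdim_pos // => /eqP.
Qed.

Lemma S1psi : S one psi = S one one.
Proof.
by move: dpsi; rewrite /qdim => /(congr1 (fun t => t * S one one)); rewrite mulfVK ?S1neq0 // mul1r.
Qed.

Lemma hpsi_sq x : h x psi ^+ 2 = 1.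
Proof.
rewrite expr2 hchar (eq_bigr (fun c => ((c == one) : nat)%:R * h x c)); last first.
  by move=> c _; rewrite HNpsi.
by rewrite sum_delta' hone.
Qed.

Lemma hpsiC y : inC y -> h y psi = 1.
Proof.
move=> hy; have := (proj2 (Htr Hpsi)) (or_intror erefl) y hy.
rewrite /monodromy S1psi invfM mulrA mulfK ?S1neq0 //.
move/(congr1 (fun t => t * S one y)); rewrite mulfVK ?S1neq0 // mul1r => e.
by rewrite /h -[S psi y]conjCK e S1real divff ?S1neq0.
Qed.

Lemma Sorth_psi : \sum_y S one y * S one y * h y psi = 0.
Proof.
transitivity ((psi == one)%:R : K); last by rewrite (negbTE Hpsi1).
rewrite -Sorth.
by apply: eq_bigr => y _; rewrite S1real /h mulrC mulrA mulfVK ?S1neq0.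
Qed.

Lemma two_neq0 : (2 : K) != 0.
Proof. by rewrite pnatr_eq0. Qed.

Lemma sumC : \sum_(y | inC y) S one y * S one y = 2^-1.
Proof.
have e1 : \sum_a qdim one S a ^+ 2 = (\sum_a S one a * S one a) / (S one one ^+ 2).
  by rewrite mulr_suml; apply: eq_bigr => a _; rewrite /qdim; field; exact: S1neq0.
have e2 : \sum_(a | inC a) qdim one S a ^+ 2 =
          (\sum_(a | inC a) S one a * S one a) / (S one one ^+ 2).
  by rewrite mulr_suml; apply: eq_bigr => a _; rewrite /qdim; field; exact: S1neq0.
move: Hdim; rewrite e1 e2 S1sum mulrA.
move/(congr1 (fun t => t * S one one ^+ 2)); rewrite !mulfVK ?expf_neq0 ?S1neq0 // => e.
by apply: (mulfI two_neq0); rewrite -e mulfV ?two_neq0.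
Qed.

Lemma hpsi_pm y : (h y psi == 1) || (h y psi == -1).
Proof. by rewrite -sqrf_eq1 hpsi_sq. Qed.

Lemma hpsi_notC y : ~~ inC y -> h y psi = -1.
Proof.
move=> hy.
pose T y := S one y * S one y * (1 + h y psi).
have eall : \sum_y T y = 1.
  rewrite /T; under eq_bigr => z _ do rewrite mulrDr mulr1.
  by rewrite big_split /= S1sum Sorth_psi addr0.
have eC : \sum_(y | inC y) T y = 1.
  rewrite /T; under eq_bigr => z hz do rewrite hpsiC //.
  by rewrite -mulr_suml sumC mulVf ?two_neq0.
have : \sum_(y | ~~ inC y) T y == 0.
  have e := eall; rewrite (bigID inC) /= eC in e.
  by apply/eqP; apply: (@addrI _ 1); rewrite addr0.
rewrite psumr_eq0; last first.
  move=> z _; rewrite /T mulr_ge0 //; first by rewrite mulr_ge0 // ltW // S1pos.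
  by case/orP: (hpsi_pm z) => /eqP ->; rewrite ?subrr ?addr_ge0 ?ler01.
move/allP/(_ y (mem_index_enum _)); rewrite hy /= /T !mulf_eq0 (negbTE (S1neq0 y)) /=.
by rewrite addrC addr_eq0 => /eqP.
Qed.
Lemma dual_psi : dual psi = psi.
Proof.
have := Nab1 psi psi; rewrite HNpsi eqxx.
by case: eqP => // -> .
Qed.

Lemma totdimV : (totdim one S)^-1 = S one one.
Proof. by rewrite /totdim invrK. Qed.

Lemma NxpsixN0 x : inC x -> N x psi x = 0%N.
Proof.
move=> hx; apply/eqP; apply/negP => nz.
rewrite Ncomm in nz.
have e := charD psi x; rewrite dpsi mul1r (bigD1 x) //= in e.
move: nz e; case En: (N psi x x) => [|m] // _ e.
set R := \sum_(c | c != x) _ in e.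
have R0 : 0 <= R by apply: sumr_ge0 => c _; rewrite mulr_ge0 ?ler0n // ltW ?qdim_pos.
have : m%:R * qdim one S x + R == 0.
  by apply/eqP; apply: (@addrI _ (qdim one S x)); rewrite addr0 [in RHS]e -natr1; ring.
rewrite paddr_eq0 //; last by rewrite mulr_ge0 ?ler0n // ltW // qdim_pos.
rewrite mulf_eq0 (gt_eqF (qdim_pos x)) orbF.
case/andP => /eqP m0; rewrite /R psumr_eq0; last first.
  by move=> c _; rewrite mulr_ge0 ?ler0n // ltW ?qdim_pos.
move/allP => Hc.
have Nc c : c != x -> N psi x c = 0%N.
  move=> cx; have := Hc c (mem_index_enum _); rewrite cx /= mulf_eq0 (gt_eqF (qdim_pos c)) orbF.
  by rewrite pnatr_eq0 => /eqP.
have m0' : m = 0%N by apply/eqP; rewrite -(pnatr_eq0 K) m0.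
have eS := Sbal psi x; rewrite dual_psi totdimV (bigD1 x) //= En m0' big1 in eS; last first.
  by move=> c cx; rewrite Nc // !mul0r.
have thx : theta x != 0 by rewrite -normr_eq0 thabs oner_eq0.
have : S psi x = - S one x.
  rewrite eS addr0 Hth /qdim; field; rewrite thx S1neq0 //.
have := hpsiC hx; rewrite /h => /(congr1 (fun t => t * S one x)); rewrite mulfVK ?S1neq0 // mul1r => ->.
move/eqP; rewrite -addr_eq0 -mulr2n mulrn_eq0 /= (negbTE (S1neq0 x)).
by [].
Qed.
Lemma dx2 x : inC x -> w x != 0 -> qdim one S x * qdim one S x = 1.
Proof.
move=> hx wx.
pose G2 b := S b x * (S b x)^*.
have way1 : \sum_(b | inC b) G2 b = qdim one S x * qdim one S x * 2^-1.
  transitivity (\sum_(b | inC b) (S one x * S one x / (S one one * S one one)) * (S one b * S one b)).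
    apply: eq_bigr => b hb.
    have e := hfeq x hb wx; rewrite /h in e.
    have Sb : S b x = f b * S one x by rewrite -e mulfVK ?S1neq0.
    rewrite /G2 Sb rmorphM /= S1real /f hb rmorphM /= conjCK qdim_real.
    rewrite /qdim.
    transitivity ((phase b)^* * phase b * (S one b / S one one * S one x * (S one b / S one one * S one x))); first by ring.
    rewrite phase_conj // mul1r; field; exact: S1neq0.
  by rewrite -mulr_sumr sumC /qdim; field; exact: S1neq0.
have way2 : \sum_(b | inC b) G2 b = 2^-1.
  rewrite big_mkcond.
  transitivity (\sum_b (2^-1 * G2 b + 2^-1 * (G2 b * h b psi))).
    apply: eq_bigr => b _; case: (boolP (inC b)) => hb.
      by rewrite hpsiC // mulr1; field.
    by rewrite hpsi_notC // mulrN1 mulrN addrN.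
  have s1 : \sum_b G2 b = 1.
    transitivity ((x == x)%:R : K); last by rewrite eqxx.
    by rewrite -colorth.
  have s2 : \sum_b G2 b * h b psi = 0.
    transitivity ((N x psi x)%:R : K); last by rewrite NxpsixN0.
    by rewrite Verl; apply: eq_bigr => b _; rewrite /G2 /h (Ssym x b); ring.
  by rewrite big_split /= -!mulr_sumr s1 s2 mulr0 addr0 mulr1.
move: way1; rewrite way2 => /(congr1 (fun t => t * 2)).
by rewrite mulVf ?two_neq0 // -mulrA mulVf ?two_neq0 // mulr1.
Qed.

Lemma abelianx x : inC x -> w x != 0 -> forall c, N x (dual x) c = (c == one) :> nat.
Proof.
move=> hx wx.
have e := charD x (dual x); rewrite qdim_dual dx2 // (bigD1 one) //= Nab1 eqxx qdim1 mulr1 in e.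
set R := \sum_(c | c != one) _ in e.
have R0 : R == 0.
  by apply/eqP; apply: (@addrI _ 1); rewrite addr0 [in RHS]e.
move: R0; rewrite /R psumr_eq0; last first.
  by move=> c _; rewrite mulr_ge0 ?ler0n // ltW ?qdim_pos.
move/allP => Hc c.
case: (eqVneq c one) => [->|co]; first by rewrite Nab1 !eqxx.
have := Hc c (mem_index_enum _); rewrite co /= mulf_eq0 (gt_eqF (qdim_pos c)) orbF.
by rewrite pnatr_eq0 => /eqP ->.
Qed.
End Aux.

Unset Implicit Arguments.
Theorem mainTheorem2 (K : numClosedFieldType) (L : finType) (one : L)
  (dual : L -> L) (N : L -> L -> L -> nat) (S : L -> L -> K) (theta : L -> K)
  (inC : pred L) (psi : L) (phase : L -> K) :
  super_modular_with_min_ext one dual N S theta inC psi ->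
  (forall a, inC a -> `|phase a| = 1) ->
  (forall a b c, inC a -> inC b -> inC c -> N a b c <> 0%N ->
     phase a * phase b = phase c) ->
  exists x : L,
    (forall a, inC a -> phase a = monodromy one S a x) /\
    (phase psi = 1 -> abelian_anyon one dual N inC x).
Proof.
move=> [UMD [HC [Hpsi [Hpsi1 [Hth [HNpsi [Htr Hdim]]]]]]] Hph Hmul.
have [x wx] := exw UMD phase HC Hph Hmul.
exists x; split.
  move=> a ha.
  have e := hfeq UMD phase HC Hph Hmul x a ha wx.
  rewrite /h /f ha /qdim in e.
  have Sax : S a x = (phase a)^* * (S one a / S one one) * S one x.
    by rewrite -e mulfVK ?(S1neq0 UMD).
  rewrite /monodromy Sax !rmorphM /= conjCK fmorphV /= !(S1real UMD).
  by field; rewrite !(S1neq0 UMD).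
move=> p1; split.
  case: (boolP (inC x)) => // hx; exfalso.
  have e1 := hpsi_notC UMD inC Hpsi Hpsi1 HNpsi Htr Hdim x hx.
  have e2 := hfeq UMD phase HC Hph Hmul x psi Hpsi wx.
  rewrite /f Hpsi p1 rmorph1 mul1r (dpsi UMD psi HNpsi) in e2.
  move: e1; rewrite e2 => /eqP; rewrite -addr_eq0 -mulr2n mulrn_eq0 /= oner_eq0.
  by [].
apply: (abelianx UMD phase HC Hph Hmul Hpsi Hpsi1 Hth HNpsi Htr Hdim) => //.
case: (boolP (inC x)) => // hx.
have e1 := hpsi_notC UMD inC Hpsi Hpsi1 HNpsi Htr Hdim x hx.
have e2 := hfeq UMD phase HC Hph Hmul x psi Hpsi wx.
rewrite /f Hpsi p1 rmorph1 mul1r (dpsi UMD psi HNpsi) in e2.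
move: e1; rewrite e2 => /eqP; rewrite -addr_eq0 -mulr2n mulrn_eq0 /= oner_eq0.
by [].
Qed.
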